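(* Let $n=3$, $A\in\mathbb{R}^{3\times 3}$ and $C\in\mathbb{R}^{1\times 3}$. Assume that $(A,C)$ is an observable pair, that all eigenvalues of $A$ are nonzero, and that $C\neq \alpha CA^{t}$ for all positive integers $t$ and all $\alpha\in\mathbb{R}$. Let $t_1,t_2$ be any two distinct nonnegative integers, let $\Delta$ be a positive integer that is not a pathological sampling period of $A$, and set $t_3=t_1+\Delta$, $t_4=t_2+\Delta$. Then the matrix with rows $CA^{t_1},CA^{t_2},CA^{t_3},CA^{t_4}$ has rank $3$.
   Context: Setting: discrete-time single-output system $x(t+1)=Ax(t)+Bu(t)$, $y(t)=Cx(t)+Du(t)$ with output measured only at selected time instances; the sample-based observability matrix for instances $t_1,\ldots,t_l$ is the matrix with rows $CA^{t_1},\ldots,CA^{t_l}$. $(A,C)$ is observable if the matrix with rows $C,CA,\ldots,CA^{n-1}$ has rank $n$. A positive integer $h$ is a pathological sampling period of $A$ if there exist two distinct eigenvalues $\lambda_p\neq\lambda_q$ of $A$ in different Jordan blocks with $\lambda_p^h=\lambda_q^h$. *)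

(* Defs.v *)
From HB Require Import structures.
From mathcomp Require Import all_boot all_order all_algebra.
From mathcomp Require Import reals.
From mathcomp Require Import complex.
Set Implicit Arguments. Unset Strict Implicit. Unset Printing Implicit Defensive.
Import Order.TTheory GRing.Theory Num.Theory.
Local Open Scope ring_scope.

Definition sample_obs_mx (R : realType) (n l : nat) (A : 'M[R]_n)
  (C : 'rV[R]_n) (ts : 'I_l -> nat) : 'M[R]_(l, n) :=
  \matrix_(i < l) (C *m A ^+ ts i).

Definition observable (R : realType) (n : nat) (A : 'M[R]_n) (C : 'rV[R]_n) :=
  \rank (sample_obs_mx A C (fun i : 'I_n => nat_of_ord i)) = n.

Definition cmx (R : realType) (n : nat) (A : 'M[R]_n) : 'M[complex R]_n :=
  map_mx (fun x : R => (x%:C)%C) A.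

Definition ceig (R : realType) (n : nat) (A : 'M[R]_n) (l : complex R) :=
  eigenvalue (cmx A) l.

(* h is a pathological sampling period of A: two distinct eigenvalues
   (hence in different Jordan blocks) with equal h-th powers *)
Definition pathological (R : realType) (n : nat) (A : 'M[R]_n) (h : nat) :=
  (0 < h)%N /\
  exists lp lq : complex R, [/\ ceig A lp, ceig A lq, lp != lq & lp ^+ h = lq ^+ h].

(* Main.v *)
Require Import Defs.
From HB Require Import structures.
From mathcomp Require Import all_boot all_order all_algebra.
From mathcomp Require Import reals.
From mathcomp Require Import complex.
From mathcomp Require Import ring zify.
Set Implicit Arguments. Unset Strict Implicit. Unset Printing Implicit Defensive.
Import Order.TTheory GRing.Theory Num.Theory.
Local Open Scope ring_scope.

Lemma mul11 (F : fieldType) n (x : 'M[F]_1) (r : 'rV[F]_n) : x *m r = x 0 0 *: r.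
Proof. by rewrite {1}[x]mx11_scalar mul_scalar_mx. Qed.

Lemma span2 (F : fieldType) k (M : 'M[F]_(k,3)) (r0 r1 w : 'rV[F]_3) :
  (\rank M <= 2)%N -> (r0 <= M)%MS -> (r1 <= M)%MS -> (w <= M)%MS ->
  (forall a b, a *: r0 + b *: r1 = 0 -> a = 0 /\ b = 0) ->
  exists a b, w = a *: r0 + b *: r1.
Proof.
move=> rk s0 s1 sw ind.
set N := col_mx r0 r1.
have fN : row_free N.
  apply: inj_row_free => v; rewrite /N -[v]hsubmxK mul_row_col !mul11 => /ind [a0 b0].
  rewrite [lsubmx v]mx11_scalar [rsubmx v]mx11_scalar a0 b0.
  by apply/matrixP => i j; rewrite !mxE; case: split => ?; rewrite mxE mul0rn.
have sNM : (N <= M)%MS by rewrite col_mx_sub s0 s1.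
have sMN : (M <= N)%MS.
  rewrite -(mxrank_leqif_sup sNM).2 eqn_leq mxrankS //=.
  by move: fN; rewrite /row_free => /eqP ->.
have /submxP [z ->] := submx_trans sw sMN.
by exists (lsubmx z 0 0), (rsubmx z 0 0); rewrite /N -{1}[z]hsubmxK mul_row_col !mul11.
Qed.

Lemma factorXs (K : numFieldType) (l : K) (s : nat) :
  exists h : {poly K}, 'X^s - (l^+s)%:P = ('X - l%:P) * h /\ h.[l] = s%:R * l^+(s.-1).
Proof.
exists (\sum_(i < s) 'X^(s.-1 - i) * (l%:P)^+i); split.
  by rewrite rmorphXn /= subrXX.
rewrite horner_sum.
have H (i : 'I_s) : (i <= s.-1)%N by case: s i => [[]|s' i]//=; rewrite -ltnS.
under eq_bigr => i _ do rewrite hornerM hornerXn -rmorphXn hornerC -exprD subnK ?H//.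
by rewrite sumr_const card_ord mulr_natl.
Qed.

Lemma core2 (K : numFieldType) (l m w : K) (s : nat) :
  l != 0 -> (0 < s)%N ->
  ('X - l%:P)^+2 * ('X - m%:P) %| ('X^s - (l^+s)%:P) * ('X^s - w%:P) ->
  (m^+s = l^+s -> m = l) -> False.
Proof.
move=> l0 s0 H1 H2.
have [h [hE hl]] := factorXs l s.
have hl0 : h.[l] != 0 by rewrite hl mulf_neq0 ?pnatr_eq0 -?lt0n ?expf_neq0.
have L0 : ('X - l%:P) != 0 by rewrite polyXsubC_eq0.
have Hw : w = l^+s.
  have : ('X - l%:P)^+2 %| ('X - l%:P) * (h * ('X^s - w%:P)).
    by rewrite mulrA -hE; apply: dvdp_trans H1; apply: dvdp_mulr.
  rewrite expr2 dvdp_mul2l // dvdp_XsubCl /root hornerM !hornerE mulf_eq0 (negbTE hl0) /=.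
  by rewrite subr_eq0 => /eqP ->.
subst w.
have Hm : m = l.
  apply: H2; have : ('X - m%:P) %| ('X^s - (l^+s)%:P) * ('X^s - (l^+s)%:P).
    by apply: dvdp_trans H1; apply: dvdp_mull.
  rewrite dvdp_XsubCl /root hornerM !hornerE mulf_eq0 orbb subr_eq0.
  by move/eqP.
subst m.
have E : ('X - l%:P) * h * (('X - l%:P) * h) = ('X - l%:P)^+2 * (h * h).
  by rewrite expr2 -!mulrA; congr (_ * _); rewrite mulrCA.
move: H1; rewrite hE E dvdp_mul2l ?expf_neq0 // dvdp_XsubCl /root hornerM mulf_eq0 orbb.
by rewrite (negbTE hl0).
Qed.

Lemma core3 (K : numFieldType) (z1 z2 z3 c d : K) (s : nat) :
  z1 != 0 -> z2 != 0 -> z3 != 0 -> (0 < s)%N ->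
  ('X - z1%:P) * ('X - z2%:P) * ('X - z3%:P) %| 'X^s * 'X^s - d%:P * 'X^s - c%:P ->
  (forall x y, x \in [:: z1; z2; z3] -> y \in [:: z1; z2; z3] -> x^+s = y^+s -> x = y) ->
  False.
Proof.
move=> n1 n2 n3 s0 H Hinj.
set P := _ - _ - _ in H.
have rootP z : ('X - z%:P) %| ('X - z1%:P) * ('X - z2%:P) * ('X - z3%:P) -> P.[z] = 0.
  by move=> Hz; have := dvdp_trans Hz H; rewrite dvdp_XsubCl => /eqP.
have r1 : P.[z1] = 0 by apply: rootP; rewrite -mulrA dvdp_mulr.
have r2 : P.[z2] = 0 by apply: rootP; rewrite mulrAC dvdp_mulIr.
have r3 : P.[z3] = 0 by apply: rootP; rewrite dvdp_mulIr.
set y1 := z1^+s; set nu := d - y1.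
have cE : c = y1 ^+ 2 - y1 * d.
  by move: r1; rewrite /P !hornerE => /eqP; rewrite subr_eq0 => /eqP <-; rewrite /y1; ring.
have PE : P = ('X^s - y1%:P) * ('X^s - nu%:P).
  rewrite /P cE /nu !rmorphB /= !rmorphM /= !rmorphXn /=.
  move: ('X^s) (z1%:P) (d%:P) => Y Z D'. ring.
have rt z : P.[z] = 0 -> z^+s = y1 \/ z^+s = nu.
  rewrite PE hornerM !hornerE => /eqP; rewrite mulf_eq0 !subr_eq0 => /orP[] /eqP; by [left|right].
have I x y : x \in [:: z1; z2; z3] -> y \in [:: z1; z2; z3] -> x^+s = y^+s -> x = y by exact: Hinj.
have i1 : z1 \in [:: z1; z2; z3] by rewrite !inE eqxx.
have i2 : z2 \in [:: z1; z2; z3] by rewrite !inE eqxx ?orbT.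
have i3 : z3 \in [:: z1; z2; z3] by rewrite !inE eqxx ?orbT.
case: (rt _ r2) => [e2|e2].
  have E : z2 = z1 by apply: I.
  apply: (@core2 K z1 z3 nu s n1 s0); last by apply: I.
  by rewrite -PE expr2; move: H; rewrite E.
case: (rt _ r3) => [e3|e3].
  have E : z3 = z1 by apply: I.
  apply: (@core2 K z1 z2 nu s n1 s0); last by apply: I.
  by rewrite -PE expr2 mulrAC; move: H; rewrite E.
have E : z3 = z2 by apply: I => //; rewrite e2 e3.
apply: (@core2 K z2 z1 y1 s n2 s0); last by move=> h; apply: I.
have -> : ('X^s - (z2 ^+ s)%:P) * ('X^s - y1%:P) = P by rewrite PE mulrC e2.
by rewrite expr2 mulrC mulrA; move: H; rewrite E.
Qed.

Section M.
Variables (R : realType) (A : 'M[R]_3) (C : 'rV[R]_3).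
Hypothesis obs : observable A C.
Let O := sample_obs_mx A C (fun i : 'I_3 => nat_of_ord i).

Lemma O_unit : O \in unitmx.
Proof. by rewrite -row_free_unit /row_free obs. Qed.

Lemma hornerXcomm (q : {poly R}) k : A ^+ k *m horner_mx A q = horner_mx A q *m A ^+ k.
Proof.
have -> : A ^+ k = horner_mx A ('X^k) by rewrite rmorphXn /= horner_mx_X.
by rewrite mulmxE -!rmorphM mulrC.
Qed.

Lemma cancel_obs (q : {poly R}) : C *m horner_mx A q = 0 -> horner_mx A q = 0.
Proof.
move=> H0.
have : O *m horner_mx A q = 0.
  apply/row_matrixP => i; rewrite row_mul rowK row0 -mulmxA hornerXcomm mulmxA H0.
  by rewrite mul0mx.
by move=> H1; rewrite -(mulKmx O_unit (horner_mx A q)) H1 mulmx0.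
Qed.

Lemma obs_poly (p : {poly R}) : (size p <= 3)%N -> horner_mx A p = 0 -> p = 0.
Proof.
move=> Hs H0.
have pE : p = \sum_(i < 3) p`_i *: 'X^i.
  rewrite -poly_def; apply/polyP => i; rewrite coef_poly; case: ltnP => // h.
  by rewrite nth_default // (leq_trans Hs h).
set v : 'rV[R]_3 := \row_(i < 3) p`_i.
have : v *m O = 0.
  transitivity (C *m horner_mx A p); last by rewrite H0 mulmx0.
  rewrite mulmx_sum_row [in RHS]pE rmorph_sum mulmx_sumr.
  apply: eq_bigr => i _; rewrite rowK mxE.
  by rewrite -mul_polyC rmorphM /= horner_mx_C rmorphXn /= horner_mx_X -mulmxE mul_scalar_mx scalemxAr.
move=> H1.
have v0 : v = 0 by rewrite -(mulmxK O_unit v) H1 mul0mx.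
apply/polyP => i; rewrite coef0; case: (ltnP i 3) => h.
  by have := congr1 (fun m : 'rV[R]_3 => m 0 (Ordinal h)) v0; rewrite !mxE.
by rewrite nth_default // (leq_trans Hs h).
Qed.


Hypothesis eig0 : forall l : complex R, ceig A l -> l != 0.

Lemma A_unit : A \in unitmx.
Proof.
apply: contraT => nu; suff: ceig A 0 by move/eig0; rewrite eqxx.
move: nu; rewrite unitmxE unitfE negbK => /eqP dA.
rewrite /ceig eigenvalue_root_char /root horner_coef0 char_poly_det.
by rewrite (det_map_mx (real_complex R)) dA rmorph0 mulr0.
Qed.

Lemma AXunit u : A ^+ u \in unitmx.
Proof. exact: (unitrX u A_unit). Qed.

Lemma cancel_obsu (q : {poly R}) u : C *m A ^+ u *m horner_mx A q = 0 -> horner_mx A q = 0.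
Proof.
move=> H; apply: cancel_obs.
by rewrite -(mulmxK (AXunit u) (C *m _)) -[C *m horner_mx A q *m A ^+ u]mulmxA -hornerXcomm mulmxA H mul0mx.
Qed.

Hypothesis Hno : forall (t : nat) (a : R), (0 < t)%N -> C != a *: (C *m A ^+ t).

Lemma NS t g : (0 < t)%N -> A ^+ t != g%:M.
Proof.
move=> t0; apply/negP => /eqP E.
have [g0|g0] := eqVneq g 0.
  subst g; have C0 : C = 0.
    by rewrite -(mulmxK (AXunit t) C) E mul_mx_scalar scale0r mul0mx.
  by have := Hno 0 t0; rewrite C0 scale0r eqxx.
by have := Hno g^-1 t0; rewrite E mul_mx_scalar scalerA mulVf // scale1r eqxx.
Qed.
Lemma hornerLin u s (a b : R) :
  C *m A ^+ u *m horner_mx A (b%:P * 'X^s + a%:P) = b *: (C *m A ^+ (u + s)) + a *: (C *m A ^+ u).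
Proof.
rewrite rmorphD rmorphM /= !horner_mx_C rmorphXn /= horner_mx_X -mulmxE mulmxDr.
by rewrite mul_scalar_mx mul_mx_scalar exprD -mulmxE mulmxA !scalemxAr.
Qed.

Lemma hornerLin2 u e : C *m A ^+ u *m horner_mx A ('X^e) = C *m A ^+ (u + e).
Proof. by rewrite rmorphXn /= horner_mx_X exprD -mulmxE mulmxA. Qed.

Lemma rel k (M : 'M[R]_(k,3)) u s e : (0 < s)%N -> (\rank M <= 2)%N ->
  (C *m A ^+ u <= M)%MS -> (C *m A ^+ (u + s) <= M)%MS -> (C *m A ^+ (u + e) <= M)%MS ->
  exists a b : R, horner_mx A ('X^e - (b%:P * 'X^s + a%:P)) = 0.
Proof.
move=> s0 rk h0 h1 h2.
have ind : forall a b, a *: (C *m A ^+ u) + b *: (C *m A ^+ (u + s)) = 0 -> a = 0 /\ b = 0.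
  move=> a b; rewrite addrC -hornerLin => /cancel_obsu.
  have [b0|b0] := eqVneq b 0.
    subst b; rewrite polyC0 mul0r add0r horner_mx_C => H.
    by have := congr1 (fun M : 'M[R]_3 => M 0 0) H; rewrite !mxE eqxx mulr1n.
  rewrite rmorphD rmorphM /= !horner_mx_C rmorphXn /= horner_mx_X.
  move=> /eqP; rewrite addr_eq0 => /eqP E; exfalso.
  have := NS (- a / b) s0.
  suff -> : A ^+ s = (- a / b)%:M by rewrite eqxx.
  rewrite mulrC scalar_mxM.
  have -> : (- a)%:M = - a%:M :> 'M[R]_3 by apply/matrixP=> i j; rewrite !mxE mulNrn.
  by rewrite -E -mulmxE mulmxA -scalar_mxM mulVf // mul1mx.
have [a [b E]] := span2 rk h0 h1 h2 ind.
exists a, b; apply: (@cancel_obsu _ u).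
by rewrite rmorphB /= mulmxBr hornerLin2 hornerLin E [in X in _ - X]addrC subrr.
Qed.

Lemma msize : size (mxminpoly A) = 4%N.
Proof.
have le4 : (size (mxminpoly A) <= 4)%N.
  have cp0 : char_poly A != 0 by rewrite -size_poly_eq0 size_char_poly.
  by have := dvdp_leq cp0 (mxminpoly_dvd_char A); rewrite size_char_poly.
apply/eqP; rewrite eqn_leq le4 /=; rewrite ltnNge; apply/negP => H.
by have := monic_neq0 (mxminpoly_monic A); rewrite (obs_poly H (mx_root_minpoly A)) eqxx.
Qed.

Variable D : nat.
Hypothesis D0 : (0 < D)%N.
Hypothesis npath : ~ pathological A D.

Lemma main k (M : 'M[R]_(k,3)) u s : (0 < s)%N -> (\rank M <= 2)%N ->
  (C *m A ^+ u <= M)%MS -> (C *m A ^+ (u + s) <= M)%MS ->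
  (C *m A ^+ (u + D) <= M)%MS -> (C *m A ^+ (u + (s + D)) <= M)%MS -> False.
Proof.
move=> s0 rk h0 h1 hD hsD.
have [a [b H1]] := rel s0 rk h0 h1 hD.
have [c [d H2]] := rel s0 rk h0 h1 hsD.
have b0 : b != 0.
  apply/negP => /eqP b0; subst b; move: H1.
  rewrite polyC0 mul0r add0r rmorphB /= horner_mx_C rmorphXn /= horner_mx_X => /eqP.
  by rewrite subr_eq0; apply/negP/NS.
set Q1 := _ - _ in H1; set Q2 := _ - _ in H2.
set P := 'X^s * 'X^s - ((d - a) / b)%:P * 'X^s - (c / b)%:P.
have PE : Q2 - 'X^s * Q1 = b *: P.
  have e1 : b * ((d - a) / b) = d - a by rewrite mulrCA divff // mulr1.
  have e2 : b * (c / b) = c by rewrite mulrCA divff // mulr1.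
  rewrite -mul_polyC /P /Q1 /Q2 !mulrBr !mulrA -!rmorphM e1 e2 exprD.
  rewrite !rmorphB /=; move: ('X^s) ('X^D) (a%:P) (b%:P) (c%:P) (d%:P) => Y Z a' b' c' d'.
  ring.
have mP : mxminpoly A %| P.
  rewrite -(dvdpZr _ _ b0) -PE dvdp_sub ?dvdp_mull //; exact: mxminpoly_min.
have mQ1 : mxminpoly A %| Q1 by exact: mxminpoly_min.
pose f := real_complex R.
have mcE : mxminpoly (cmx A) = map_poly f (mxminpoly A) by exact: mxminpoly_map.
have mcP : mxminpoly (cmx A) %| map_poly f P by rewrite mcE dvdp_map.
have mcQ : mxminpoly (cmx A) %| map_poly f Q1 by rewrite mcE dvdp_map.
have [r rE] := closed_field_poly_normal (mxminpoly (cmx A)).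
move: rE; rewrite (monicP (mxminpoly_monic _)) scale1r => rE.
have sr : size r = 3%N.
  have := size_prod_XsubC r id; rewrite -rE mcE size_map_poly msize.
  by case.
have eigr z : z \in r -> ceig A z.
  by move=> zr; rewrite /ceig eigenvalue_root_min rE root_prod_XsubC.
have Q1r z : z \in r -> z ^+ D = f b * z ^+ s + f a.
  move=> zr; have : root (mxminpoly (cmx A)) z by rewrite rE root_prod_XsubC.
  rewrite -dvdp_XsubCl => /dvdp_trans /(_ mcQ); rewrite dvdp_XsubCl /root /Q1.
  rewrite !rmorphB !rmorphD !rmorphM /= !map_polyXn !map_polyC /= !hornerE.
  by rewrite subr_eq0 => /eqP.
have inj x y : x \in r -> y \in r -> x ^+ s = y ^+ s -> x = y.
  move=> xr yr e; case: (eqVneq x y) => // nxy; exfalso; apply: npath; split => //.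
  exists x, y; split; rewrite ?eigr //.
  by rewrite (Q1r x xr) (Q1r y yr) e.
move: r rE sr eigr inj {Q1r} => [|z1 [|z2 [|z3 []]]] // rE _ eigr inj.
have nz z : z \in [:: z1; z2; z3] -> z != 0 by move=> zr; apply/eig0/eigr.
apply: (@core3 _ z1 z2 z3 (f (c / b)) (f ((d - a) / b)) s) => //;
  try (apply: nz; by rewrite !inE eqxx ?orbT).
move: mcP; rewrite rE !big_cons big_nil mulr1 mulrA /P.
rewrite !rmorphB !rmorphM /= !map_polyXn !map_polyC -!rmorphM /=. by [].
Qed.
End M.

Unset Implicit Arguments.
Theorem theorem3 (R : realType) (A : 'M[R]_3) (C : 'rV[R]_3)
  (t1 t2 D : nat) :
  observable A C ->
  (forall l : complex R, ceig A l -> l != 0) ->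
  (forall (t : nat) (a : R), (0 < t)%N -> C != a *: (C *m A ^+ t)) ->
  t1 != t2 ->
  (0 < D)%N ->
  ~ pathological A D ->
  \rank (sample_obs_mx A C
           (fun i : 'I_4 => nth 0%N [:: t1; t2; t1 + D; t2 + D]%N i)) = 3%N.
Proof.
move=> obs eig0 Hno t12 D0 np.
set M := sample_obs_mx _ _ _.
apply/eqP; rewrite eqn_leq rank_leq_col /= leqNgt; apply/negP => rk.
have rw (i : 'I_4) : (C *m A ^+ (nth 0%N [:: t1; t2; t1 + D; t2 + D]%N i) <= M)%MS.
  by have := row_sub i M; rewrite /M /sample_obs_mx rowK.
have r1 := rw 0; have r2 := rw 1; have r3 := rw 2; have r4 := rw 3.
simpl in r1, r2, r3, r4.
case: (ltngtP t1 t2) t12 => // h _.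
  apply: (main obs eig0 Hno D0 np (u := t1) (s := t2 - t1) _ rk) => //; first by lia.
    by have -> : (t1 + (t2 - t1) = t2)%N by lia.
  by have -> : (t1 + (t2 - t1 + D) = t2 + D)%N by lia.
apply: (main obs eig0 Hno D0 np (u := t2) (s := t1 - t2) _ rk) => //; first by lia.
  by have -> : (t2 + (t1 - t2) = t1)%N by lia.
by have -> : (t2 + (t1 - t2 + D) = t1 + D)%N by lia.
Qed.
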